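(* Let $(\mathfrak{g}_0,[\cdot,\cdot]_0,\langle\cdot,\cdot\rangle_0)$ be a Euclidean Lie algebra, let $\mu\in\mathbb{R}$, $b\in\mathfrak{g}_0$, and let $K,D:\mathfrak{g}_0\to\mathfrak{g}_0$ be endomorphisms with $K$ skew-symmetric, such that the double extension $\mathfrak{g}=\mathbb{R}e\oplus\mathfrak{g}_0\oplus\mathbb{R}\bar e$ with parameters $(K,D,\mu,b)$ (described in the context) is a Lie algebra. Then the Lorentzian Lie algebra $(\mathfrak{g},\langle\cdot,\cdot\rangle)$ is Einstein if and only if $\mathfrak{g}$ is Ricci-flat, $(\mathfrak{g}_0,\langle\cdot,\cdot\rangle_0)$ is Ricci-flat, and for all $u\in\mathfrak{g}_0$: $$4\,\mathrm{tr}(\mathrm{ad}^0_b)+4\mu\,\mathrm{tr}(D)-2\,\mathrm{tr}(D^2)-2\,\mathrm{tr}(DD^* )-\mathrm{tr}(K^2)=0,$$ $$\mathrm{tr}(J^0_u\circ K)+2\,\mathrm{tr}\big((D+D^* )\circ\mathrm{ad}^0_u\big)+2\,\mathrm{tr}(\mathrm{ad}_{D^*(u)})-2\,\mathrm{tr}(\mathrm{ad}_{K(u)})=0.$$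
   Context: Double extension: $\mathfrak{g}=\mathbb{R}e\oplus\mathfrak{g}_0\oplus\mathbb{R}\bar e$ with Lorentzian form $\langle e,e\rangle=\langle\bar e,\bar e\rangle=0$, $\langle e,\bar e\rangle=1$, $\mathfrak{g}_0\perp\{e,\bar e\}$, $\langle\cdot,\cdot\rangle|_{\mathfrak{g}_0}=\langle\cdot,\cdot\rangle_0$, and skew-symmetric bracket $[\bar e,e]=\mu e$, $[\bar e,u]=D(u)+\langle b,u\rangle_0e$, $[u,v]=[u,v]_0+\langle K(u),v\rangle_0e$, $[e,u]=0$ for $u,v\in\mathfrak{g}_0$. Here $\mathrm{ad}^0$ is the adjoint representation of $\mathfrak{g}_0$, $\mathrm{ad}$ that of $\mathfrak{g}$, adjoints $^*$ are with respect to $\langle\cdot,\cdot\rangle_0$, and $J^0_u(v)=(\mathrm{ad}^0_v)^*(u)$. The Levi-Civita product $\mathrm{L}$ of a metric Lie algebra is given by $2\langle \mathrm{L}_uv,w\rangle=\langle[u,v],w\rangle+\langle[w,u],v\rangle+\langle[w,v],u\rangle$, curvature $K(u,v)=\mathrm{L}_{[u,v]}-[\mathrm{L}_u,\mathrm{L}_v]$, Ricci operator $\langle\mathrm{Ric}(u),v\rangle=\mathrm{tr}(w\mapsto K(u,w)v)$; Einstein means $\mathrm{Ric}=\lambda\mathrm{Id}$ for some $\lambda\in\mathbb{R}$, Ricci-flat means $\mathrm{Ric}=0$. *)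

(* Defs.v *)
From HB Require Import structures.
From mathcomp Require Import all_boot all_order all_algebra.
From mathcomp Require Import reals.
Set Implicit Arguments. Unset Strict Implicit. Unset Printing Implicit Defensive.
Import Order.TTheory GRing.Theory Num.Theory.
Local Open Scope ring_scope.

Section Generic.
Variable R : realType.

(* vectors of a metric Lie algebra of dimension N are column vectors 'cV_N;
   the (possibly indefinite) scalar product is given by its Gram matrix G. *)
Definition ip N (G : 'M[R]_N) (u v : 'cV[R]_N) : R := (u^T *m G *m v) 0 0.

Definition ebase N (k : 'I_N) : 'cV[R]_N := delta_mx k 0.

Definition is_lie N (br : 'cV[R]_N -> 'cV_N -> 'cV_N) : Prop :=
  [/\ (forall a x y z, br (a *: x + y) z = a *: br x z + br y z),
      (forall a x y z, br z (a *: x + y) = a *: br z x + br z y),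
      (forall x y, br x y = - br y x) &
      (forall x y z, br x (br y z) + br y (br z x) + br z (br x y) = 0)].

Definition adm N (br : 'cV[R]_N -> 'cV_N -> 'cV_N) (u : 'cV_N) : 'M[R]_N :=
  \matrix_(i, j) (br u (ebase j)) i 0.

(* adjoint of an endomorphism A w.r.t. the scalar product with Gram matrix G:
   <A u, v> = <u, A^* v> *)
Definition adjoint N (G : 'M[R]_N) (A : 'M[R]_N) : 'M[R]_N :=
  invmx G *m A^T *m G.

(* Levi-Civita product: the unique L_u v with
   2 <L_u v, w> = <[u,v],w> + <[w,u],v> + <[w,v],u>  for all w *)
Definition LC N (br : 'cV[R]_N -> 'cV_N -> 'cV_N) (G : 'M[R]_N) (u v : 'cV_N)
  : 'cV[R]_N :=
  invmx G *m \col_k (2^-1 * (ip G (br u v) (ebase k) + ip G (br (ebase k) u) v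
                             + ip G (br (ebase k) v) u)).

Definition curv N br (G : 'M[R]_N) (u v w : 'cV[R]_N) : 'cV[R]_N :=
  LC br G (br u v) w - (LC br G u (LC br G v w) - LC br G v (LC br G u w)).

Definition ricform N br (G : 'M[R]_N) (u v : 'cV[R]_N) : R :=
  \tr (\matrix_(i, j) (curv br G u (ebase j) v) i 0).

Definition Ric N br (G : 'M[R]_N) (u : 'cV[R]_N) : 'cV[R]_N :=
  invmx G *m \col_k ricform br G u (ebase k).

Definition einstein N br (G : 'M[R]_N) : Prop :=
  exists lambda : R, forall u, Ric br G u = lambda *: u.

Definition ricci_flat N br (G : 'M[R]_N) : Prop := forall u, Ric br G u = 0.

Definition euclidean n (G0 : 'M[R]_n) : Prop :=
  G0^T = G0 /\ forall u : 'cV[R]_n, u != 0 -> 0 < ip G0 u u.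

Definition Jm n br0 (G0 : 'M[R]_n) (u : 'cV[R]_n) : 'M[R]_n :=
  \matrix_(i, j) (adjoint G0 (adm br0 (ebase j)) *m u) i 0.

(* an element a e + u + c ebar is the column vector col_mx (col_mx a u) c *)
Definition mkg n (a : R) (u : 'cV[R]_n) (c : R) : 'cV[R]_(1 + n + 1) :=
  col_mx (col_mx a%:M u) c%:M.
Definition ecoord n (x : 'cV[R]_(1 + n + 1)) : R := usubmx (usubmx x) 0 0.
Definition g0part n (x : 'cV[R]_(1 + n + 1)) : 'cV[R]_n := dsubmx (usubmx x).
Definition ebcoord n (x : 'cV[R]_(1 + n + 1)) : R := dsubmx x 0 0.

Definition dext_ip n (G0 : 'M[R]_n) (x y : 'cV[R]_(1 + n + 1)) : R :=
  ecoord x * ebcoord y + ebcoord x * ecoord y + ip G0 (g0part x) (g0part y).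
Definition dext_G n (G0 : 'M[R]_n) : 'M[R]_(1 + n + 1) :=
  \matrix_(i, j) dext_ip G0 (ebase i) (ebase j).

(* bracket, the bilinear skew extension of
   [ebar,e] = mu e, [ebar,u] = D u + <b,u>_0 e, [u,v] = [u,v]_0 + <K u, v>_0 e,
   [e,u] = 0, [e,e] = [ebar,ebar] = 0 *)
Definition dext_br n (br0 : 'cV[R]_n -> 'cV_n -> 'cV_n) (G0 : 'M[R]_n)
  (K D : 'M[R]_n) (mu : R) (b : 'cV[R]_n) (x y : 'cV[R]_(1 + n + 1))
  : 'cV[R]_(1 + n + 1) :=
  let a := ecoord x in let u := g0part x in let c := ebcoord x in
  let a' := ecoord y in let v := g0part y in let c' := ebcoord y in
  mkg (mu * (c * a' - a * c') + c * ip G0 b v - c' * ip G0 b u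
         + ip G0 (K *m u) v)
      (c *: (D *m v) - c' *: (D *m u) + br0 u v)
      0.

End Generic.

(* Main.v *)
Require Import Defs.
From HB Require Import structures.
From mathcomp Require Import all_boot all_order all_algebra.
From mathcomp Require Import reals ring lra.
Set Implicit Arguments. Unset Strict Implicit. Unset Printing Implicit Defensive.
Import Order.TTheory GRing.Theory Num.Theory.
Local Open Scope ring_scope.

Section Gen.
Variable R : realType.
Variable N : nat.
Implicit Types (G A B : 'M[R]_N) (x y z u v w : 'cV[R]_N).

Definition linv (f : 'cV[R]_N -> 'cV[R]_N) :=
  forall a x y, f (a *: x + y) = a *: f x + f y.
Definition lins (f : 'cV[R]_N -> R) :=
  forall a x y, f (a *: x + y) = a * f x + f y.
Definition Mf (f : 'cV[R]_N -> 'cV[R]_N) : 'M[R]_N :=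
  \matrix_(i, j) (f (ebase R j)) i 0.

Lemma ebaseE m (A : 'M[R]_(m, N)) k i j : (A *m ebase R k) i j = A i k.
Proof. by rewrite /ebase -colE !mxE. Qed.

Lemma colsum v : v = \sum_j v j 0 *: ebase R j.
Proof.
rewrite {1}(matrix_sum_delta v); apply: eq_bigr => j _.
by rewrite big_ord1 /ebase.
Qed.

Lemma linv0 f : linv f -> f 0 = 0.
Proof.
move=> H; have h := H 1 0 0; rewrite scaler0 addr0 scale1r in h.
by apply: (addrI (f 0)); rewrite addr0 -h.
Qed.
Lemma linvD f : linv f -> forall x y, f (x + y) = f x + f y.
Proof. by move=> H x y; have := H 1 x y; rewrite !scale1r. Qed.
Lemma linvZ f : linv f -> forall a x, f (a *: x) = a *: f x.
Proof. by move=> H a x; rewrite -[a *: x]addr0 H (linv0 H) addr0. Qed.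
Lemma linvN f : linv f -> forall x, f (- x) = - f x.
Proof. by move=> H x; rewrite -scaleN1r linvZ // scaleN1r. Qed.

Lemma linv_mx f : linv f -> forall v, f v = Mf f *m v.
Proof.
move=> H v; rewrite {1}(colsum v).
rewrite (big_morph f (linvD H) (linv0 H)).
apply/colP => i; rewrite summxE !mxE; apply: eq_bigr => j _.
by rewrite linvZ // !mxE mulrC.
Qed.

Lemma lins0 f : lins f -> f 0 = 0.
Proof.
move=> H; have h := H 1 0 0; rewrite scaler0 addr0 mul1r in h.
by apply: (addrI (f 0)); rewrite addr0 -h.
Qed.
Lemma linsD f : lins f -> forall x y, f (x + y) = f x + f y.
Proof. by move=> H x y; have := H 1 x y; rewrite scale1r mul1r. Qed.
Lemma linsZ f : lins f -> forall a x, f (a *: x) = a * f x.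
Proof. by move=> H a x; rewrite -[a *: x]addr0 H (lins0 H) addr0. Qed.

Lemma lins_sum f : lins f -> forall v, f v = \sum_j v j 0 * f (ebase R j).
Proof.
move=> H v; rewrite {1}(colsum v).
rewrite (big_morph f (linsD H) (lins0 H)).
by apply: eq_bigr => j _; rewrite linsZ.
Qed.

Lemma mx_ext A B : (forall x, A *m x = B *m x) -> A = B.
Proof.
move=> H; apply/matrixP => i j.
by rewrite -(ebaseE A j i 0) -(ebaseE B j i 0) H.
Qed.

Lemma Mf_ext f A : (forall w, f w = A *m w) -> Mf f = A.
Proof. by move=> H; apply/matrixP => i j; rewrite mxE H ebaseE. Qed.

Lemma ipl G a x y z : ip G (a *: x + y) z = a * ip G x z + ip G y z.
Proof. by rewrite /ip linearD linearZ /= !mulmxDl -!scalemxAl !mxE. Qed.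
Lemma ipr G a x y z : ip G z (a *: x + y) = a * ip G z x + ip G z y.
Proof. by rewrite /ip mulmxDr -scalemxAr !mxE. Qed.
Lemma ip0l G x : ip G 0 x = 0.
Proof. by rewrite /ip trmx0 !mul0mx mxE. Qed.
Lemma ip0r G x : ip G x 0 = 0.
Proof. by rewrite /ip mulmx0 mxE. Qed.
Lemma ipDl G x y z : ip G (x + y) z = ip G x z + ip G y z.
Proof. by have := ipl G 1 x y z; rewrite scale1r mul1r. Qed.
Lemma ipDr G x y z : ip G z (x + y) = ip G z x + ip G z y.
Proof. by have := ipr G 1 x y z; rewrite scale1r mul1r. Qed.
Lemma ipZl G a x z : ip G (a *: x) z = a * ip G x z.
Proof. by rewrite -[a *: x]addr0 ipl ip0l addr0. Qed.
Lemma ipZr G a x z : ip G z (a *: x) = a * ip G z x.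
Proof. by rewrite -[a *: x]addr0 ipr ip0r addr0. Qed.
Lemma ipNl G x z : ip G (- x) z = - ip G x z.
Proof. by rewrite -scaleN1r ipZl mulN1r. Qed.
Lemma ipNr G x z : ip G z (- x) = - ip G z x.
Proof. by rewrite -scaleN1r ipZr mulN1r. Qed.
Lemma ipBl G x y z : ip G (x - y) z = ip G x z - ip G y z.
Proof. by rewrite ipDl ipNl. Qed.
Lemma ipBr G x y z : ip G z (x - y) = ip G z x - ip G z y.
Proof. by rewrite ipDr ipNr. Qed.
Lemma ipC G x y : G^T = G -> ip G x y = ip G y x.
Proof.
move=> sG; rewrite /ip; transitivity ((y^T *m G *m x)^T 0 0); last by rewrite mxE.
by rewrite !trmx_mul !trmxK sG mulmxA.
Qed.

Lemma ip_inv G c w : G^T = G -> G \in unitmx ->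
  ip G (invmx G *m c) w = \sum_k c k 0 * w k 0.
Proof.
move=> sG uG; rewrite /ip trmx_mul trmx_inv sG -(mulmxA c^T) mulVmx // mulmx1.
by rewrite !mxE; apply: eq_bigr => k _; rewrite !mxE.
Qed.

Lemma ip_nondeg G x y : G \in unitmx -> (forall w, ip G x w = ip G y w) -> x = y.
Proof.
move=> uG H; have h : x^T *m G = y^T *m G.
  apply/rowP => k; have := H (ebase R k); rewrite /ip !ebaseE => ->.
  by rewrite !mxE; apply: eq_bigr => j _; rewrite !mxE.
apply: trmx_inj; have := congr1 (mulmx^~ (invmx G)) h.
by rewrite -!mulmxA mulmxV // !mulmx1.
Qed.

Lemma mx_ext_ip G A B : G \in unitmx ->
  (forall x y, ip G (A *m x) y = ip G (B *m x) y) -> A = B.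
Proof. by move=> uG H; apply: mx_ext => x; apply: (ip_nondeg uG) => y; apply: H. Qed.

Variable br : 'cV[R]_N -> 'cV[R]_N -> 'cV[R]_N.
Hypothesis brl : forall a x y z, br (a *: x + y) z = a *: br x z + br y z.
Hypothesis brr : forall a x y z, br z (a *: x + y) = a *: br z x + br z y.

Lemma LC_char G u v w : G^T = G -> G \in unitmx ->
  ip G (LC br G u v) w =
  2^-1 * (ip G (br u v) w + ip G (br w u) v + ip G (br w v) u).
Proof.
move=> sG uG; rewrite /LC ip_inv //.
pose phi z := ip G (br u v) z + ip G (br z u) v + ip G (br z v) u.
have lp : lins phi.
  by move=> a x y; rewrite /phi ipr !brl !ipl; ring.
rewrite -/(phi w) (lins_sum lp w) mulr_sumr; apply: eq_bigr => k _.
by rewrite mxE /phi; ring.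
Qed.

Lemma LC_unique G u v z : G^T = G -> G \in unitmx ->
  (forall w, ip G z w = 2^-1 * (ip G (br u v) w + ip G (br w u) v + ip G (br w v) u)) ->
  LC br G u v = z.
Proof.
by move=> sG uG H; apply: (ip_nondeg uG) => w; rewrite LC_char // H.
Qed.

Lemma LC_linl G a u u' v : G^T = G -> G \in unitmx ->
  LC br G (a *: u + u') v = a *: LC br G u v + LC br G u' v.
Proof.
move=> sG uG; apply: LC_unique => // w.
rewrite ipl !LC_char // brl brr !ipl ipr; ring.
Qed.

Lemma LC_linr G a u v v' : G^T = G -> G \in unitmx ->
  LC br G u (a *: v + v') = a *: LC br G u v + LC br G u v'.
Proof.
move=> sG uG; apply: LC_unique => // w.
rewrite ipl !LC_char // brr brr !ipl ipr; ring.
Qed.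

End Gen.

Section Euc.
Variable R : realType.
Variable n : nat.
Variable br0 : 'cV[R]_n -> 'cV[R]_n -> 'cV[R]_n.
Variable G0 : 'M[R]_n.
Hypothesis brl : forall a x y z, br0 (a *: x + y) z = a *: br0 x z + br0 y z.
Hypothesis brr : forall a x y z, br0 z (a *: x + y) = a *: br0 z x + br0 z y.
Hypothesis bra : forall x y, br0 x y = - br0 y x.
Hypothesis sG : G0^T = G0.
Hypothesis uG : G0 \in unitmx.
Implicit Types (A B S X : 'M[R]_n) (x y z u v w p q : 'cV[R]_n).

Local Notation adj := (adjoint G0).
Local Notation "<< x , y >>" := (ip G0 x y).

Lemma ip_adj A x y : << adj A *m x, y >> = << x, A *m y >>.
Proof.
rewrite /adjoint /ip !trmx_mul trmx_inv sG trmxK.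
rewrite !mulmxA -[x^T *m G0 *m A *m invmx G0 *m G0]mulmxA mulVmx // mulmx1.
done.
Qed.

Lemma ipCs x y : << x, y >> = << y, x >>.
Proof. exact: ipC. Qed.

Lemma adjK A : adj (adj A) = A.
Proof. by apply: (mx_ext_ip uG) => x y; rewrite ip_adj ipCs ip_adj ipCs. Qed.
Lemma adjM A B : adj (A *m B) = adj B *m adj A.
Proof. by apply: (mx_ext_ip uG) => x y; rewrite ip_adj -[adj B *m adj A *m x]mulmxA ip_adj ip_adj mulmxA. Qed.
Lemma adjD A B : adj (A + B) = adj A + adj B.
Proof. by rewrite /adjoint linearD /= mulmxDr mulmxDl. Qed.
Lemma adjZ a A : adj (a *: A) = a *: adj A.
Proof. by rewrite /adjoint linearZ /= -scalemxAr -scalemxAl. Qed.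
Lemma adjN A : adj (- A) = - adj A.
Proof. by rewrite -scaleN1r adjZ scaleN1r. Qed.
Lemma adjB A B : adj (A - B) = adj A - adj B.
Proof. by rewrite adjD adjN. Qed.
Lemma tr_adj A : \tr (adj A) = \tr A.
Proof. by rewrite /adjoint mxtrace_mulC mulmxA mulmxV // mul1mx mxtrace_tr. Qed.

Lemma tr_skew_sym X S : adj X = - X -> adj S = S -> \tr (X *m S) = 0.
Proof.
move=> hX hS; have h : \tr (X *m S) = - \tr (X *m S).
  by rewrite -{1}tr_adj adjM hX hS mulmxN linearN /= mxtrace_mulC.
have : 2 * \tr (X *m S) = 0 by rewrite mulr2n mulrDl mul1r {1}h addNr.
by move/eqP; rewrite mulf_eq0 pnatr_eq0 /= => /eqP.
Qed.

Lemma tr_skew X : adj X = - X -> \tr X = 0.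
Proof. by move=> h; rewrite -(mulmx1 X) (tr_skew_sym h) // /adjoint trmx1 mulmx1 mulVmx. Qed.

Lemma linv_br u : linv (br0 u).
Proof. by move=> a x y; rewrite brr. Qed.
Lemma admE u w : adm br0 u *m w = br0 u w.
Proof. by rewrite (linv_mx (linv_br u) w). Qed.
Lemma adm_lin a u v : adm br0 (a *: u + v) = a *: adm br0 u + adm br0 v.
Proof.
apply: mx_ext => x; rewrite mulmxDl -scalemxAl !admE; exact: brl.
Qed.
Lemma linv_J u : linv (fun w => adj (adm br0 w) *m u).
Proof. by move=> a x y /=; rewrite adm_lin adjD adjZ mulmxDl -scalemxAl. Qed.
Lemma JmE u w : Jm br0 G0 u *m w = adj (adm br0 w) *m u.
Proof. by rewrite (linv_mx (linv_J u) w). Qed.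
Lemma Jm_lin a u v : Jm br0 G0 (a *: u + v) = a *: Jm br0 G0 u + Jm br0 G0 v.
Proof.
by apply: mx_ext => x; rewrite mulmxDl -scalemxAl !JmE mulmxDr -scalemxAr.
Qed.
Lemma Jm_skew u : adj (Jm br0 G0 u) = - Jm br0 G0 u.
Proof.
apply: (mx_ext_ip uG) => x y; rewrite ip_adj mulNmx ipNl !JmE.
rewrite ipCs !ip_adj !admE bra ipNr; done.
Qed.

Fact Lm_key : unit. Proof. by []. Qed.
Definition Lm u := locked_with Lm_key (2^-1 *: (adm br0 u - adj (adm br0 u) - Jm br0 G0 u)).
Fact Rm_key : unit. Proof. by []. Qed.
Definition Rm u := locked_with Rm_key (Lm u - adm br0 u).
Lemma RmE u : Rm u = Lm u - adm br0 u. Proof. by rewrite /Rm locked_withE. Qed.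
Lemma LmE u : Lm u = 2^-1 *: (adm br0 u - adj (adm br0 u) - Jm br0 G0 u).
Proof. by rewrite /Lm locked_withE. Qed.

Lemma LCE u w : LC br0 G0 u w = Lm u *m w.
Proof.
apply: LC_unique => // z.
rewrite LmE -scalemxAl ipZl !mulmxBl !ipBl admE ip_adj JmE ip_adj admE.
rewrite [<< w, _ >>]ipCs [<< u, _ >>]ipCs !admE [br0 u z]bra [br0 w z]bra !ipNl; ring.
Qed.

Lemma Lm_skew u : adj (Lm u) = - Lm u.
Proof.
rewrite !LmE adjZ !adjB adjK Jm_skew -scalerN; congr (_ *: _).
by rewrite opprD opprB.
Qed.

Lemma tr_Lm u : \tr (Lm u) = 0.
Proof. exact/tr_skew/Lm_skew. Qed.

Lemma tr_LmS u S : adj S = S -> \tr (Lm u *m S) = 0.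
Proof. by move=> hS; apply: tr_skew_sym => //; apply: Lm_skew. Qed.

Lemma tr_LmK u K : adj K = - K ->
  \tr (Lm u *m K) = \tr (adm br0 u *m K) - 2^-1 * \tr (Jm br0 G0 u *m K).
Proof.
move=> hK; rewrite LmE -scalemxAl mxtraceZ !mulmxBl !linearB /=.
have -> : \tr (adj (adm br0 u) *m K) = - \tr (adm br0 u *m K).
  rewrite -tr_adj adjM adjK hK mulNmx linearN /= mxtrace_mulC //.
lra.
Qed.

Lemma torsion p y : LC br0 G0 p y = Rm y *m p.
Proof.
have h : LC br0 G0 p y - LC br0 G0 y p = br0 p y.
  apply: (ip_nondeg uG) => w; rewrite ipBl !LC_char // [br0 y p]bra ipNl; lra.
by rewrite RmE mulmxBl admE -LCE [br0 y p]bra opprK -h addrC subrK.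
Qed.


Lemma tr_Rm z : \tr (Rm z) = - \tr (adm br0 z).
Proof. by rewrite RmE linearB /= tr_Lm sub0r. Qed.

Lemma Lm_lin a u v : Lm (a *: u + v) = a *: Lm u + Lm v.
Proof.
apply: mx_ext => w; rewrite mulmxDl -(scalemxAl a) -!LCE; by rewrite LC_linl.
Qed.
Lemma Rm_lin a u v : Rm (a *: u + v) = a *: Rm u + Rm v.
Proof.
apply: mx_ext => w; rewrite (mulmxDl (a *: Rm u)) -(scalemxAl a) -!torsion; by rewrite LC_linr.
Qed.
Lemma LmM_lin x a u v : Lm x *m (a *: u + v) = a *: (Lm x *m u) + Lm x *m v.
Proof. by rewrite mulmxDr scalemxAr. Qed.

Lemma ricE x y : ricform br0 G0 x y =
  \tr (Rm y *m adm br0 x - Lm x *m Rm y + Rm (Lm x *m y)).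
Proof.
rewrite /ricform.
have h : forall w, curv br0 G0 x w y =
  (Rm y *m adm br0 x - Lm x *m Rm y + Rm (Lm x *m y)) *m w.
  move=> w; rewrite /curv (torsion (br0 x w) y) (LCE x (LC br0 G0 w y)).
  rewrite (torsion w y) (torsion w (LC br0 G0 x y)) (LCE x y).
  by rewrite (mulmxDl (Rm y *m adm br0 x - Lm x *m Rm y)) (mulmxBl (Rm y *m adm br0 x)) -(mulmxA (Rm y)) -(mulmxA (Lm x)) admE opprD opprK addrA.
by rewrite -(Mf_ext h).
Qed.

Lemma lin6 (P Q R' S T U : 'cV[R]_n) a :
  (a *: P + Q) - ((a *: R' + S) - (a *: T + U)) = a *: (P - (R' - T)) + (Q - (S - U)).
Proof. by apply/colP => i; rewrite !mxE; ring. Qed.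

Lemma trE (F : 'I_n -> 'I_n -> R) : \tr (\matrix_(i, j) F i j) = \sum_i F i i.
Proof. by rewrite /mxtrace; apply: eq_bigr => i _; rewrite mxE. Qed.
Lemma entry_lin (P Q : 'cV[R]_n) a i : (a *: P + Q) i 0 = a * P i 0 + Q i 0.
Proof. by rewrite !mxE. Qed.

Lemma mxtraceB (X Y : 'M[R]_n) : \tr (X - Y) = \tr X - \tr Y.
Proof. exact: linearB. Qed.
Lemma mxtraceN (X : 'M[R]_n) : \tr (- X) = - \tr X.
Proof. exact: linearN. Qed.

Lemma ric_lins x : lins (ricform br0 G0 x).
Proof.
move=> a y z; rewrite !ricE LmM_lin !Rm_lin.
rewrite (mulmxDl (a *: Rm y)) (mulmxDr (Lm x) (a *: Rm y)) -!scalemxAl -!scalemxAr.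
rewrite !(opprD, mxtraceD, mxtraceN, mxtraceZ); ring.
Qed.

Lemma scalemxAl' m1 m2 m3 (c : R) (X : 'M[R]_(m1, m2)) (Y : 'M[R]_(m2, m3)) :
  (c *: X) *m Y = c *: (X *m Y).
Proof. by rewrite scalemxAl. Qed.
Lemma scalemxAr' m1 m2 m3 (c : R) (X : 'M[R]_(m1, m2)) (Y : 'M[R]_(m2, m3)) :
  X *m (c *: Y) = c *: (X *m Y).
Proof. by rewrite scalemxAr. Qed.

Lemma trace_identity A :
  \tr ((2^-1 *: (A - adj A) - A) *m A - 2^-1 *: (A - adj A) *m (2^-1 *: (A - adj A) - A))
  = - 4^-1 * \tr (adj (A + adj A) *m (A + adj A)).
Proof.
rewrite adjD adjK.
have t1 : \tr (adj A *m adj A) = \tr (A *m A) by rewrite -adjM tr_adj.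
have t2 : \tr (A *m adj A) = \tr (adj A *m A) by rewrite mxtrace_mulC.
rewrite !(mulmxDl, mulmxDr, mulmxBl, mulmxBr, mulmxN, mulNmx, scalemxAl', scalemxAr').
rewrite !(mxtraceD, mxtraceB, mxtraceN, mxtraceZ, scalerDr, scalerBr) t1 t2.
lra.
Qed.

Section Jac.
Hypothesis jac : forall x y z,
  br0 x (br0 y z) + br0 y (br0 z x) + br0 z (br0 x y) = 0.

Lemma brN x y : br0 x (- y) = - br0 x y.
Proof. exact: (linvN (linv_br x)). Qed.

Lemma adm_br x y : adm br0 (br0 x y) = adm br0 x *m adm br0 y - adm br0 y *m adm br0 x.
Proof.
apply: mx_ext => z; rewrite mulmxBl -!mulmxA !admE.
have := jac x y z; rewrite [br0 z x]bra brN.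
move/eqP; rewrite addrC addr_eq0 => /eqP h.
by rewrite bra h opprK.
Qed.

Lemma tr_adm_br x y : \tr (adm br0 (br0 x y)) = 0.
Proof. by rewrite adm_br linearB /= mxtrace_mulC subrr. Qed.

Definition Hv := invmx G0 *m \col_k \tr (adm br0 (ebase R k)).

Lemma ip_Hv v : << Hv, v >> = \tr (adm br0 v).
Proof.
have l : lins (fun v => \tr (adm br0 v)).
  by move=> a x y; rewrite adm_lin linearD linearZ.
rewrite ip_inv // (lins_sum l v); apply: eq_bigr => k _; rewrite mxE mulrC.
done.
Qed.

Lemma Jm_Hv : Jm br0 G0 Hv = 0.
Proof.
apply: (mx_ext_ip uG) => x y.
by rewrite JmE ip_adj admE ip_Hv tr_adm_br mul0mx ip0l.
Qed.

Lemma ric_HH : ricform br0 G0 Hv Hv =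
  - 4^-1 * \tr (adj (adm br0 Hv + adj (adm br0 Hv)) *m (adm br0 Hv + adj (adm br0 Hv))).
Proof.
rewrite ricE.
have h3 : \tr (Rm (Lm Hv *m Hv)) = 0.
  rewrite tr_Rm -ip_Hv.
  have : << Hv, Lm Hv *m Hv >> = - << Hv, Lm Hv *m Hv >>.
    by rewrite -{1}ip_adj Lm_skew mulNmx ipNl ipCs.
  by move/eqP; rewrite -addr_eq0 -mulr2n mulrn_eq0 /= => /eqP ->; rewrite oppr0.
rewrite mxtraceD h3 addr0 !RmE !LmE Jm_Hv subr0.
exact: trace_identity.
Qed.

End Jac.
End Euc.

Section Chol.
Variable R : realType.

Lemma quad_block m (A : 'M[R]_1) (B : 'M[R]_(1, m)) (C : 'M[R]_(m, 1)) (D : 'M[R]_m)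
  (x : 'cV[R]_1) (v : 'cV[R]_m) :
  (col_mx x v)^T *m block_mx A B C D *m col_mx x v =
  x^T *m A *m x + x^T *m B *m v + v^T *m C *m x + v^T *m D *m v.
Proof.
rewrite tr_col_mx mul_row_block mul_row_col !mulmxDl.
by rewrite addrACA !addrA.
Qed.

Lemma chol_step n (IH : forall G : 'M[R]_n, G^T = G ->
    (forall u, u != 0 -> 0 < ip G u u) ->
    exists P, P \in unitmx /\ P^T *m G *m P = 1%:M)
  (G : 'M[R]_(1 + n)) : G^T = G -> (forall u, u != 0 -> 0 < ip G u u) ->
  exists P, P \in unitmx /\ P^T *m G *m P = 1%:M.
Proof.
move=> sG pd.
set a := ulsubmx G 0 0; set r := ursubmx G; set D := drsubmx G.
have hA : ulsubmx G = a%:M by rewrite /a -mx11_scalar.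
have hC : dlsubmx G = r^T by rewrite /r trmx_ursub sG.
have hG : G = block_mx a%:M r r^T D by rewrite -hA -hC /r /D submxK.
have sD : D^T = D by rewrite /D trmx_drsub sG.
have a_pos : 0 < a.
  have nz : col_mx (1%:M : 'cV[R]_1) (0 : 'cV[R]_n) != 0.
    by rewrite col_mx_eq0 negb_and oner_eq0.
  have := pd _ nz; rewrite /ip hG quad_block trmx0 !mulmx0 !mul0mx !addr0.
  by rewrite trmx1 mul1mx mulmx1 mxE eqxx mulr1n.
have a0 : a != 0 by rewrite gt_eqF.
pose P1 : 'M[R]_(1 + n) := block_mx 1%:M (- a^-1 *: r) 0 1%:M.
pose G2 := D - a^-1 *: (r^T *m r).
have E1 : P1^T *m G *m P1 = block_mx a%:M 0 0 G2.
  rewrite /P1 hG tr_block_mx !trmx1 trmx0 !mulmx_block.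
  rewrite !(mul1mx, mulmx1, mul0mx, mulmx0, addr0, add0r).
  have e1 : a%:M *m (- a^-1 *: r) + r = 0.
    by rewrite mul_scalar_mx scalerA mulrN mulfV // scaleN1r addNr.
  have e2 : (- a^-1 *: r)^T *m a%:M + r^T = 0.
    by rewrite mul_mx_scalar linearZ /= scalerA mulrN mulfV // scaleN1r addNr.
  rewrite ?trmx1 ?mul1mx e1 e2 mul0mx add0r linearZ /= -scalemxAl scaleNr addrC.
  done.
have uP1 : P1 \in unitmx.
  by rewrite unitmxE /P1 det_ublock !det1 mulr1 unitr1.
have sG2 : G2^T = G2.
  by rewrite /G2 linearB /= sD linearZ /= trmx_mul trmxK.
have pd2 : forall v, v != 0 -> 0 < ip G2 v v.
  move=> v vnz; set w := col_mx (0 : 'cV[R]_1) v.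
  have wnz : w != 0 by rewrite col_mx_eq0 negb_and vnz orbT.
  have unz : P1 *m w != 0.
    apply: contra wnz => /eqP h; apply/eqP.
    by rewrite -[w](mulKmx uP1) h mulmx0.
  have := pd _ unz; rewrite /ip trmx_mul !mulmxA -(mulmxA _ P1^T) -(mulmxA _ (P1^T *m G)).
  rewrite -(mulmxA w^T) E1 mulmxA /w quad_block trmx0 !mul0mx !mulmx0 !add0r.
  done.
have [P2 [uP2 E2]] := IH _ sG2 pd2.
set s := Num.sqrt a.
have s_pos : 0 < s by rewrite sqrtr_gt0.
have s0 : s != 0 by rewrite gt_eqF.
pose P3 : 'M[R]_(1 + n) := block_mx (s^-1)%:M 0 0 P2.
exists (P1 *m P3); split.
  rewrite unitmx_mul uP1 /= unitmxE /P3 det_ublock det_scalar1 unitrM.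
  by rewrite unitfE invr_eq0 s0 -unitmxE uP2.
rewrite trmx_mul !mulmxA -(mulmxA _ P1^T) -(mulmxA _ (P1^T *m G)) -(mulmxA P3^T) E1.
rewrite /P3 tr_block_mx !trmx0 tr_scalar_mx !mulmx_block.
rewrite !(mul0mx, mulmx0, addr0, add0r) -!scalar_mxM mulmxA E2.
have -> : s^-1 * (a / s) = 1.
  have sa : a = s * s by rewrite /s -expr2 sqr_sqrtr // ltW.
  by rewrite sa; field.
by rewrite -scalar_mx_block.
Qed.

Lemma chol n (G : 'M[R]_n) : G^T = G -> (forall u, u != 0 -> 0 < ip G u u) ->
  exists P, P \in unitmx /\ P^T *m G *m P = 1%:M.
Proof.
elim: n G => [|n IH] G sG pd.
  by exists 1%:M; split; [exact: unitmx1 | apply/matrixP => [] []].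
exact: (chol_step IH).
Qed.

End Chol.

Section Unimod.
Variable R : realType.
Variable n : nat.
Implicit Types (S Z : 'M[R]_n) (u v : 'cV[R]_n).

Lemma pd_unit (G : 'M[R]_n) : (forall u, u != 0 -> 0 < ip G u u) -> G \in unitmx.
Proof.
move=> pd; rewrite -row_free_unit; apply: inj_row_free => v hv.
apply/eqP; apply: contraT => vnz.
have : v^T != 0 by apply: contra vnz => /eqP h; rewrite -[v]trmxK h trmx0.
move/pd; rewrite /ip trmxK hv mul0mx mxE ltxx //.
Qed.

Lemma ebase_trE m (X : 'M[R]_(n, m)) i j : ((ebase R i)^T *m X) 0 j = X i j.
Proof.
by rewrite -{1}[X]trmxK -trmx_mul mxE ebaseE mxE.
Qed.

Lemma tr_pos (G : 'M[R]_n) S : G^T = G -> (forall u, u != 0 -> 0 < ip G u u) ->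
  \tr (adjoint G S *m S) = 0 -> S = 0.
Proof.
move=> sG pd h; have uG := pd_unit pd.
have [P [uP EP]] := chol sG pd.
have uPt : P^T \in unitmx by rewrite unitmx_tr.
have hI : G *m (P *m P^T) = 1%:M.
  have e : P^T *m (G *m (P *m P^T)) = P^T *m 1%:M by rewrite mulmx1 !mulmxA EP mul1mx.
  by rewrite -[LHS](mulKmx uPt) e mulKmx.
have hinv : invmx G = P *m P^T.
  by rewrite -[RHS](mulKmx uG) hI mulmx1.
set Z := S *m P.
have htr : \tr (adjoint G S *m S) = \sum_i ip G (Z *m ebase R i) (Z *m ebase R i).
  rewrite /adjoint hinv -!mulmxA mxtrace_mulC -!mulmxA.
  rewrite /mxtrace; apply: eq_bigr => i _.
  rewrite /ip trmx_mul !mulmxA -ebase_trE /Z trmx_mul !mulmxA.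
  by rewrite ebaseE.
have hZ : Z = 0.
  apply/matrixP => j i; rewrite [in RHS]mxE -(ebaseE Z i j 0).
  have : ip G (Z *m ebase R i) (Z *m ebase R i) = 0.
    apply: (psumr_eq0P (P := xpredT) (F := fun k => ip G (Z *m ebase R k) (Z *m ebase R k))) => //.
      move=> k _; have [->|nz] := eqVneq (Z *m ebase R k) 0; first by rewrite ip0l.
      exact/ltW/pd.
    by rewrite -htr.
  have [->|nz] := eqVneq (Z *m ebase R i) 0; first by rewrite mxE.
  by move=> e; have := pd _ nz; rewrite e ltxx.
by rewrite -[S](mulmxK uP) -/Z hZ mul0mx.
Qed.

Variable br0 : 'cV[R]_n -> 'cV[R]_n -> 'cV[R]_n.
Variable G0 : 'M[R]_n.

Lemma unimod : is_lie br0 -> euclidean G0 -> ricci_flat br0 G0 ->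
  forall v, \tr (adm br0 v) = 0.
Proof.
case=> brl brr bra jac [sG pd] rf.
have uG := pd_unit pd.
have brl' : forall a x y z, br0 (a *: x + y) z = a *: br0 x z + br0 y z by [].
have h0 : forall k, ricform br0 G0 (Hv br0 G0) (ebase R k) = 0.
  move=> k; have := rf (Hv br0 G0); rewrite /Ric => h.
  have : \col_k0 ricform br0 G0 (Hv br0 G0) (ebase R k0) = 0.
    by rewrite -[LHS](mulKVmx uG) h mulmx0.
  by move/matrixP/(_ k 0); rewrite !mxE.
have hHH : ricform br0 G0 (Hv br0 G0) (Hv br0 G0) = 0.
  rewrite (lins_sum (ric_lins brl brr bra sG uG (Hv br0 G0))) big1 // => k _.
  by rewrite h0 mulr0.
rewrite (ric_HH brl brr bra sG uG jac) in hHH.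
have hS : \tr (adjoint G0 (adm br0 (Hv br0 G0) + adjoint G0 (adm br0 (Hv br0 G0))) *m
     (adm br0 (Hv br0 G0) + adjoint G0 (adm br0 (Hv br0 G0)))) = 0.
  by move: hHH => /eqP; rewrite mulf_eq0 oppr_eq0 invr_eq0 pnatr_eq0 /= => /eqP.
have := tr_pos sG pd hS => /(congr1 mxtrace).
rewrite mxtraceD (tr_adj uG) linear0 -mulr2n => /eqP; rewrite mulrn_eq0 /= => /eqP htr.
have hv : Hv br0 G0 = 0.
  apply/eqP; apply: contraT => nz; have := pd _ nz.
  by rewrite (ip_Hv brl brr sG uG) htr ltxx.
by move=> v; rewrite -(ip_Hv brl brr sG uG) hv ip0l.
Qed.

End Unimod.

Section DExt.
Variable R : realType.
Variable n : nat.
Local Notation V := 'cV[R]_(1 + n + 1).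
Local Notation W := 'cV[R]_n.
Implicit Types (x y z : V) (u v w : W).

Definition ie : 'I_(1 + n + 1) := lshift 1 (lshift n ord0).
Definition ig (k : 'I_n) : 'I_(1 + n + 1) := lshift 1 (rshift 1 k).
Definition ib : 'I_(1 + n + 1) := rshift (1 + n) ord0.

Lemma ecoordE x : ecoord x = x ie 0.
Proof. by rewrite /ecoord !mxE. Qed.
Lemma g0partE x k : g0part x k 0 = x (ig k) 0.
Proof. by rewrite /g0part !mxE. Qed.
Lemma ebcoordE x : ebcoord x = x ib 0.
Proof. by rewrite /ebcoord !mxE. Qed.

Lemma ecoord_mkg a u c : ecoord (mkg a u c) = a.
Proof. by rewrite /ecoord /mkg !col_mxKu mxE eqxx mulr1n. Qed.
Lemma g0part_mkg a u c : g0part (mkg a u c) = u.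
Proof. by rewrite /g0part /mkg col_mxKu col_mxKd. Qed.
Lemma ebcoord_mkg a u c : ebcoord (mkg a u c) = c.
Proof. by rewrite /ebcoord /mkg col_mxKd mxE eqxx mulr1n. Qed.

Lemma mkgK x : mkg (ecoord x) (g0part x) (ebcoord x) = x.
Proof.
rewrite /mkg /ecoord /g0part /ebcoord -mx11_scalar -mx11_scalar.
by rewrite vsubmxK vsubmxK.
Qed.

Lemma mkg_ext x a u c : ecoord x = a -> g0part x = u -> ebcoord x = c -> x = mkg a u c.
Proof. by move=> <- <- <-; rewrite mkgK. Qed.

Lemma ecoordL p x y : ecoord (p *: x + y) = p * ecoord x + ecoord y.
Proof. by rewrite !ecoordE !mxE. Qed.
Lemma ebcoordL p x y : ebcoord (p *: x + y) = p * ebcoord x + ebcoord y.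
Proof. by rewrite !ebcoordE !mxE. Qed.
Lemma g0partL p x y : g0part (p *: x + y) = p *: g0part x + g0part y.
Proof. by apply/colP => k; rewrite !mxE -!g0partE. Qed.
Lemma ecoordB x y : ecoord (x - y) = ecoord x - ecoord y.
Proof. by rewrite !ecoordE !mxE. Qed.
Lemma ebcoordB x y : ebcoord (x - y) = ebcoord x - ebcoord y.
Proof. by rewrite !ebcoordE !mxE. Qed.
Lemma g0partB x y : g0part (x - y) = g0part x - g0part y.
Proof. by apply/colP => k; rewrite !mxE -!g0partE. Qed.

Lemma mkgB a u c a' u' c' : mkg a u c - mkg a' u' c' = mkg (a - a') (u - u') (c - c').
Proof.
by apply: mkg_ext; rewrite ?ecoordB ?g0partB ?ebcoordB ?ecoord_mkg ?g0part_mkg ?ebcoord_mkg.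
Qed.
Lemma mkgL p a u c a' u' c' :
  p *: mkg a u c + mkg a' u' c' = mkg (p * a + a') (p *: u + u') (p * c + c').
Proof.
by apply: mkg_ext; rewrite ?ecoordL ?g0partL ?ebcoordL ?ecoord_mkg ?g0part_mkg ?ebcoord_mkg.
Qed.
Lemma mkg0 : mkg 0 0 0 = 0 :> V.
Proof. apply/esym/mkg_ext; rewrite ?ecoordE ?ebcoordE ?mxE //. by apply/colP => k; rewrite g0partE !mxE. Qed.

Lemma ebase_ie : ebase R ie = mkg 1 0 0.
Proof.
apply: mkg_ext.
- by rewrite ecoordE mxE !eqxx.
- by apply/colP => k; rewrite g0partE !mxE /ig /ie (inj_eq (@lshift_inj _ _)) eq_rlshift.
- by rewrite ebcoordE mxE /ib /ie eq_rlshift.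
Qed.
Lemma ebase_ig k : ebase R (ig k) = mkg 0 (ebase R k) 0.
Proof.
apply: mkg_ext.
- by rewrite ecoordE mxE /ig /ie (inj_eq (@lshift_inj _ _)) eq_lrshift.
- apply/colP => j; rewrite g0partE !mxE /ig (inj_eq (@lshift_inj _ _)).
  by rewrite (inj_eq (@rshift_inj _ _)).
- by rewrite ebcoordE mxE /ib /ig eq_rlshift.
Qed.
Lemma ebase_ib : ebase R ib = mkg 0 0 1.
Proof.
apply: mkg_ext.
- by rewrite ecoordE mxE /ib /ie eq_lrshift.
- by apply/colP => k; rewrite g0partE !mxE /ig /ib eq_lrshift.
- by rewrite ebcoordE mxE !eqxx.
Qed.

Lemma sumN (f : 'I_(1 + n + 1) -> R) :
  \sum_i f i = f ie + \sum_k f (ig k) + f ib.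
Proof. by rewrite big_split_ord big_split_ord !big_ord1. Qed.

Lemma trN (F : V -> V) :
  \tr (\matrix_(i, j) (F (ebase R j)) i 0) =
  ecoord (F (mkg 1 0 0)) + \sum_k g0part (F (mkg 0 (ebase R k) 0)) k 0
  + ebcoord (F (mkg 0 0 1)).
Proof.
rewrite /mxtrace sumN !mxE ebase_ie ebase_ib ecoordE ebcoordE; congr (_ + _ + _).
by apply: eq_bigr => k _; rewrite mxE ebase_ig g0partE.
Qed.

End DExt.

Section DExt2.
Variable R : realType.
Variable n : nat.
Local Notation V := 'cV[R]_(1 + n + 1).
Local Notation W := 'cV[R]_n.
Variable br0 : W -> W -> W.
Variables (G0 K D : 'M[R]_n) (mu : R) (b : W).
Hypothesis brl : forall a x y z, br0 (a *: x + y) z = a *: br0 x z + br0 y z.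
Hypothesis brr : forall a x y z, br0 z (a *: x + y) = a *: br0 z x + br0 z y.
Hypothesis bra : forall x y, br0 x y = - br0 y x.
Hypothesis sG : G0^T = G0.
Hypothesis pd : forall u : W, u != 0 -> 0 < ip G0 u u.
Hypothesis Kskew : forall u v : W, ip G0 (K *m u) v = - ip G0 u (K *m v).
Local Notation br := (dext_br br0 G0 K D mu b).
Local Notation G := (dext_G G0).
Hypothesis brlg : forall a (x y z : V), br (a *: x + y) z = a *: br x z + br y z.
Hypothesis brrg : forall a (x y z : V), br z (a *: x + y) = a *: br z x + br z y.
Implicit Types (x y z : V) (u v w : W).

Let uG : G0 \in unitmx := pd_unit pd.

Lemma dext_ip_mkg a u c a' v c' :
  dext_ip G0 (mkg a u c) (mkg a' v c') = a * c' + c * a' + ip G0 u v.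
Proof. by rewrite /dext_ip !ecoord_mkg !g0part_mkg !ebcoord_mkg. Qed.

Lemma dext_br_mkg a u c a' v c' :
  br (mkg a u c) (mkg a' v c') =
  mkg (mu * (c * a' - a * c') + c * ip G0 b v - c' * ip G0 b u + ip G0 (K *m u) v)
      (c *: (D *m v) - c' *: (D *m u) + br0 u v) 0.
Proof. by rewrite /dext_br /= !ecoord_mkg !g0part_mkg !ebcoord_mkg. Qed.

Lemma dext_ipC x y : dext_ip G0 x y = dext_ip G0 y x.
Proof. by rewrite /dext_ip (ipC _ _ sG); ring. Qed.

Lemma dext_ipr x : lins (dext_ip G0 x).
Proof. by move=> p y z; rewrite /dext_ip ecoordL ebcoordL g0partL ipr; ring. Qed.
Lemma dext_ipl y : lins (dext_ip G0 ^~ y).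
Proof. by move=> p x z; rewrite /dext_ip ecoordL ebcoordL g0partL ipl; ring. Qed.

Lemma ipG x y : ip G x y = dext_ip G0 x y.
Proof.
have l1 : forall x', lins (ip G x') by move=> x' p u v; rewrite ipr.
rewrite (lins_sum (l1 x) y) (lins_sum (dext_ipr x) y); apply: eq_bigr => j _.
congr (_ * _).
have l2 : lins (ip G ^~ (ebase R j)) by move=> p u v; rewrite ipl.
rewrite (lins_sum l2 x) (lins_sum (dext_ipl (ebase R j)) x); apply: eq_bigr => i _.
congr (_ * _).
by rewrite /ip ebaseE ebase_trE /dext_G mxE.
Qed.

Lemma symG : G^T = G.
Proof. by apply/matrixP => i j; rewrite !mxE dext_ipC. Qed.

Lemma ipW_ge0 u : 0 <= ip G0 u u.
Proof. by have [->|nz] := eqVneq u 0; [rewrite ip0l | exact/ltW/pd]. Qed.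

Lemma uGG : G \in unitmx.
Proof.
rewrite -row_free_unit; apply: inj_row_free => v hv.
have h : forall y, dext_ip G0 v^T y = 0.
  by move=> y; rewrite -ipG /ip trmxK hv mul0mx mxE.
have := h (mkg (ebcoord v^T) (g0part v^T) (ecoord v^T)).
rewrite -{1}(mkgK v^T) dext_ip_mkg.
set a := ecoord v^T; set u := g0part v^T; set c := ebcoord v^T => e.
have qu := ipW_ge0 u.
have a0 : a = 0 by nra.
have c0 : c = 0 by nra.
have q0 : ip G0 u u = 0 by nra.
have u0 : u = 0.
  by apply/eqP; apply: contraT => nz; have := pd nz; rewrite q0 ltxx.
by rewrite -[v]trmxK -(mkgK v^T) -/a -/u -/c a0 u0 c0 mkg0 trmx0.
Qed.


Fact P_key : unit. Proof. by []. Qed.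
Definition Pm := locked_with P_key (2^-1 *: (D + adjoint G0 D + K)).
Lemma PmE : Pm = 2^-1 *: (D + adjoint G0 D + K).
Proof. by rewrite /Pm locked_withE. Qed.

Lemma ipP u w : ip G0 (Pm *m u) w =
  2^-1 * (ip G0 (D *m u) w + ip G0 (D *m w) u + ip G0 (K *m u) w).
Proof.
rewrite PmE -scalemxAl ipZl !mulmxDl !ipDl (ip_adj sG uG) (ipC u (D *m w) sG).
done.
Qed.

Lemma LCg a u c a' v c' :
  LC br G (mkg a u c) (mkg a' v c') =
  mkg (ip G0 (Pm *m u) v + mu * c * a' + c * ip G0 b v)
      (LC br0 G0 u v - c' *: (Pm *m u) + c *: (D *m v - Pm *m v) - (c * c') *: b)
      (- (mu * c * c')).
Proof.
apply: (LC_unique brlg); [exact: symG | exact: uGG | move=> w].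
rewrite -(mkgK w); move: (ecoord w) (g0part w) (ebcoord w) => a2 w0 c2.
rewrite !ipG !dext_br_mkg !dext_ip_mkg.
rewrite !(ipDl, ipBl, ipZl, ipNl) !ipP (LC_char brl) //.
rewrite (Kskew w0 u) (Kskew w0 v) (ipC w0 (K *m u) sG) (ipC w0 (K *m v) sG).
by field.
Qed.


Lemma br0_0l v : br0 0 v = 0.
Proof. have l : linv (br0 ^~ v) by move=> p x y; rewrite brl. exact: (linv0 l). Qed.
Lemma br0_0r u : br0 u 0 = 0.
Proof. have l : linv (br0 u) by move=> p x y; rewrite brr. exact: (linv0 l). Qed.
Lemma LC0l v : LC br0 G0 0 v = 0.
Proof.
have l : linv (LC br0 G0 ^~ v) by move=> p x y; rewrite (LC_linl brl brr).
exact: (linv0 l).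
Qed.
Lemma LC0r u : LC br0 G0 u 0 = 0.
Proof.
have l : linv (LC br0 G0 u) by move=> p x y; rewrite (LC_linr brl brr).
exact: (linv0 l).
Qed.

Ltac simpg := rewrite ?(scale0r, scaler0, scale1r, mulmx0, mul0mx, add0r, addr0,
  subr0, sub0r, oppr0, mul0r, mulr0, mul1r, mulr1, ip0l, ip0r, br0_0l, br0_0r,
  LC0l, LC0r).

Ltac curvg := rewrite /curv !dext_br_mkg !LCg; simpg; rewrite ?LCg; simpg; rewrite !mkgB.

Lemma curv_e (x y : V) : curv br G (mkg 1 0 0) x y = 0.
Proof.
rewrite -(mkgK x) -(mkgK y).
move: (ecoord x) (g0part x) (ebcoord x) (ecoord y) (g0part y) (ebcoord y) => a2 w0 c2 a3 y0 c3.
curvg; simpg; exact: mkg0.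
Qed.

Lemma B_e u v : ecoord (curv br G (mkg 0 u 0) (mkg 1 0 0) (mkg 0 v 0)) = 0.
Proof. curvg; rewrite ecoord_mkg; ring. Qed.
Lemma B_eb u v : ebcoord (curv br G (mkg 0 u 0) (mkg 0 0 1) (mkg 0 v 0)) = 0.
Proof. curvg; rewrite ebcoord_mkg; ring. Qed.
Lemma B_g0 u w v : g0part (curv br G (mkg 0 u 0) (mkg 0 w 0) (mkg 0 v 0)) = curv br0 G0 u w v.
Proof. by curvg; rewrite g0part_mkg. Qed.
Lemma C_e : ecoord (curv br G (mkg 0 0 1) (mkg 1 0 0) (mkg 0 0 1)) = 0.
Proof. curvg; rewrite ecoord_mkg; ring. Qed.
Lemma C_eb : ebcoord (curv br G (mkg 0 0 1) (mkg 0 0 1) (mkg 0 0 1)) = 0.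
Proof. curvg; rewrite ebcoord_mkg; ring. Qed.
Lemma D_e u : ecoord (curv br G (mkg 0 u 0) (mkg 1 0 0) (mkg 0 0 1)) = 0.
Proof. curvg; rewrite ecoord_mkg; ring. Qed.
Lemma D_eb u : ebcoord (curv br G (mkg 0 u 0) (mkg 0 0 1) (mkg 0 0 1)) = 0.
Proof. curvg; rewrite ebcoord_mkg; ring. Qed.

Lemma LCNr u v : LC br0 G0 u (- v) = - LC br0 G0 u v.
Proof.
have l : linv (LC br0 G0 u) by move=> p x y; rewrite (LC_linr brl brr).
exact: (linvN l).
Qed.

Local Notation Rm0 := (Rm br0 G0).
Local Notation Lm0 := (Lm br0 G0).

Lemma C_g0 w : g0part (curv br G (mkg 0 0 1) (mkg 0 w 0) (mkg 0 0 1)) =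
  - (Pm *m (D *m w)) + D *m (Pm *m w) - Pm *m (Pm *m w) - Rm0 b *m w + mu *: (Pm *m w).
Proof.
curvg; rewrite g0part_mkg !mulmxN LCNr (torsion brl brr bra sG uG).
apply: (ip_nondeg uG) => z; rewrite !(ipDl, ipBl, ipNl, ipZl); ring.
Qed.

Lemma D_g0 u w : g0part (curv br G (mkg 0 u 0) (mkg 0 w 0) (mkg 0 0 1)) =
  - (Pm *m (adm br0 u *m w)) + Lm0 u *m (Pm *m w) - Rm0 (Pm *m u) *m w.
Proof.
curvg; rewrite g0part_mkg !LCNr (torsion brl brr bra sG uG w (Pm *m u)).
rewrite (LCE brl brr bra sG uG u (Pm *m w)) (admE brr).
apply: (ip_nondeg uG) => z; rewrite !(ipDl, ipBl, ipNl, ipZl); ring.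
Qed.


Lemma trW (F : W -> W) :
  \tr (\matrix_(i, j) (F (ebase R j)) i 0) = \sum_k (F (ebase R k)) k 0.
Proof. by rewrite /mxtrace; apply: eq_bigr => k _; rewrite mxE. Qed.

Lemma ric_uv u v : ricform br G (mkg 0 u 0) (mkg 0 v 0) = ricform br0 G0 u v.
Proof.
rewrite /ricform (trN (fun x => curv br G (mkg 0 u 0) x (mkg 0 v 0))) B_e B_eb add0r addr0.
rewrite (trW (fun w => curv br0 G0 u w v)); apply: eq_bigr => k _.
by rewrite B_g0.
Qed.

Lemma ric_ee : ricform br G (mkg 0 0 1) (mkg 0 0 1) =
  - \tr (Pm *m Pm) + mu * \tr Pm + \tr (adm br0 b).
Proof.
rewrite /ricform (trN (fun x => curv br G (mkg 0 0 1) x (mkg 0 0 1))) C_e C_eb add0r addr0.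
have -> : \sum_k g0part (curv br G (mkg 0 0 1) (mkg 0 (ebase R k) 0) (mkg 0 0 1)) k 0 =
  \tr (- (Pm *m D) + D *m Pm - Pm *m Pm - Rm0 b + mu *: Pm).
  rewrite /mxtrace; apply: eq_bigr => k _; rewrite C_g0 -(ebaseE _ k k 0).
  congr (_ _ _).
  rewrite !mulmxDl ?mulmxBl !mulNmx -!mulmxA -scalemxAl //.
rewrite !(mxtraceD, mxtraceN, mxtraceZ) (mxtrace_mulC D) (tr_Rm brl brr bra sG uG).
ring.
Qed.

Lemma ric_ue u : ricform br G (mkg 0 u 0) (mkg 0 0 1) =
  - \tr (Pm *m adm br0 u) + \tr (Lm0 u *m Pm) + \tr (adm br0 (Pm *m u)).
Proof.
rewrite /ricform (trN (fun x => curv br G (mkg 0 u 0) x (mkg 0 0 1))) D_e D_eb add0r addr0.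
have -> : \sum_k g0part (curv br G (mkg 0 u 0) (mkg 0 (ebase R k) 0) (mkg 0 0 1)) k 0 =
  \tr (- (Pm *m adm br0 u) + Lm0 u *m Pm - Rm0 (Pm *m u)).
  rewrite /mxtrace; apply: eq_bigr => k _; rewrite D_g0 -(ebaseE _ k k 0).
  congr (_ _ _).
  rewrite !mulmxDl ?mulmxBl !mulNmx -!mulmxA //.
rewrite !(mxtraceD, mxtraceN) (tr_Rm brl brr bra sG uG).
ring.
Qed.


Lemma adjK_skew : adjoint G0 K = - K.
Proof.
apply: (mx_ext_ip uG) => x y; rewrite (ip_adj sG uG) mulNmx ipNl Kskew opprK.
done.
Qed.
Lemma trK : \tr K = 0.
Proof. exact: (tr_skew sG uG adjK_skew). Qed.

Lemma trP : \tr Pm = \tr D.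
Proof. rewrite PmE mxtraceZ !mxtraceD (tr_adj uG) trK; lra. Qed.

Lemma trPP : \tr (Pm *m Pm) =
  2^-1 * \tr (D *m D) + 2^-1 * \tr (D *m adjoint G0 D) + 4^-1 * \tr (K *m K).
Proof.
rewrite PmE (scalemxAl' _ (D + adjoint G0 D + K)) (scalemxAr' _ (D + adjoint G0 D + K)).
rewrite !mxtraceZ !mulmxDl !mulmxDr !mxtraceD.
have t1 : \tr (adjoint G0 D *m adjoint G0 D) = \tr (D *m D) by rewrite -(adjM sG uG) (tr_adj uG).
have t2 : \tr (adjoint G0 D *m D) = \tr (D *m adjoint G0 D) by rewrite mxtrace_mulC.
have t3 : \tr (adjoint G0 D *m K) = - \tr (K *m D).
  by rewrite -{1}(adjK sG uG K) -(adjM sG uG) (tr_adj uG) adjK_skew mulNmx mxtraceN.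
have t4 : \tr (K *m adjoint G0 D) = - \tr (D *m K).
  by rewrite -{1}(adjK sG uG K) -(adjM sG uG) (tr_adj uG) adjK_skew mulmxN mxtraceN.
have t5 : \tr (K *m D) = \tr (D *m K) by rewrite mxtrace_mulC.
rewrite t1 t2 t3 t4 t5; lra.
Qed.

Lemma trLmP u : \tr (Lm0 u *m Pm) =
  2^-1 * \tr (adm br0 u *m K) - 4^-1 * \tr (Jm br0 G0 u *m K).
Proof.
rewrite PmE scalemxAr' mxtraceZ mulmxDr mxtraceD.
rewrite (tr_LmS brl brr bra sG uG); last by rewrite adjD (adjK sG uG) addrC.
rewrite (tr_LmK br0 sG uG _ adjK_skew); lra.
Qed.

Lemma trPadm u : \tr (Pm *m adm br0 u) =
  2^-1 * \tr ((D + adjoint G0 D) *m adm br0 u) + 2^-1 * \tr (adm br0 u *m K).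
Proof.
rewrite PmE scalemxAl' mxtraceZ mulmxDl mxtraceD (mxtrace_mulC K); lra.
Qed.

Lemma tr_admg v : \tr (adm br (mkg 0 v 0)) = \tr (adm br0 v).
Proof.
rewrite /adm (trN (fun y => br (mkg 0 v 0) y)) (trW (fun w => br0 v w)).
rewrite !dext_br_mkg ecoord_mkg ebcoord_mkg; simpg.
under eq_bigr => k _ do rewrite dext_br_mkg g0part_mkg.
by apply: eq_bigr => k _; simpg.
Qed.


Hypothesis jac : forall x y z : W,
  br0 x (br0 y z) + br0 y (br0 z x) + br0 z (br0 x y) = 0.

Lemma ric_zero_e (y : V) : ricform br G (mkg 1 0 0) y = 0.
Proof.
rewrite /ricform.
have -> : (\matrix_(i, j) (curv br G (mkg 1 0 0) (ebase R j) y) i 0) = 0.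
  by apply/matrixP => i j; rewrite mxE curv_e !mxE.
by rewrite linear0.
Qed.

Lemma fwd : einstein br G ->
  [/\ ricci_flat br G, ricci_flat br0 G0,
      4 * \tr (adm br0 b) + 4 * mu * \tr D - 2 * \tr (D *m D)
        - 2 * \tr (D *m adjoint G0 D) - \tr (K *m K) = 0 &
      forall u : 'cV[R]_n,
        \tr (Jm br0 G0 u *m K) + 2 * \tr ((D + adjoint G0 D) *m adm br0 u)
        + 2 * \tr (adm br (mkg 0 (adjoint G0 D *m u) 0))
        - 2 * \tr (adm br (mkg 0 (K *m u) 0)) = 0].
Proof.
case=> lam hl.
have hRe : Ric br G (mkg 1 0 0) = 0.
  rewrite /Ric.
  have -> : \col_k ricform br G (mkg 1 0 0) (ebase R k) = 0.
    by apply/colP => k; rewrite mxE ric_zero_e mxE.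
  by rewrite mulmx0.
have e0 : ecoord (0 : V) = 0 by rewrite ecoordE mxE.
have lam0 : lam = 0.
  have := hl (mkg 1 0 0); rewrite hRe => /(congr1 (@ecoord R n)).
  by rewrite e0 -[lam *: _]addr0 ecoordL ecoord_mkg e0 mulr1 addr0.
have rf : ricci_flat br G by move=> x; rewrite hl lam0 scale0r.
have rz : forall x j, ricform br G x (ebase R j) = 0.
  move=> x j; have := rf x; rewrite /Ric => h.
  have : \col_k ricform br G x (ebase R k) = 0.
    by rewrite -[LHS](mulKVmx uGG) h mulmx0.
  by move/colP/(_ j); rewrite !mxE.
have rf0 : ricci_flat br0 G0.
  move=> u; rewrite /Ric.
  have -> : \col_k ricform br0 G0 u (ebase R k) = 0.
    by apply/colP => k; rewrite mxE -ric_uv -ebase_ig rz mxE.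
  by rewrite mulmx0.
have um : forall v, \tr (adm br0 v) = 0.
  by apply: unimod => //; split.
split => //.
- have := rz (mkg 0 0 1) (ib n); rewrite ebase_ib ric_ee trPP trP um => h; lra.
- move=> u; have := rz (mkg 0 u 0) (ib n).
  rewrite ebase_ib ric_ue trPadm trLmP !tr_admg !um => h; lra.
Qed.

End DExt2.


Unset Implicit Arguments.
Set Strict Implicit.

Theorem proposition4p2 (R : realType) (n : nat)
  (br0 : 'cV[R]_n -> 'cV[R]_n -> 'cV[R]_n) (G0 : 'M[R]_n)
  (mu : R) (b : 'cV[R]_n) (K D : 'M[R]_n) :
  is_lie br0 -> euclidean G0 ->
  (forall u v : 'cV[R]_n, ip G0 (K *m u) v = - ip G0 u (K *m v)) ->
  is_lie (dext_br br0 G0 K D mu b) ->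
  let br := dext_br br0 G0 K D mu b in
  let G := dext_G G0 in
  einstein br G <->
  [/\ ricci_flat br G, ricci_flat br0 G0,
      4 * \tr (adm br0 b) + 4 * mu * \tr D - 2 * \tr (D *m D)
        - 2 * \tr (D *m adjoint G0 D) - \tr (K *m K) = 0 &
      forall u : 'cV[R]_n,
        \tr (Jm br0 G0 u *m K) + 2 * \tr ((D + adjoint G0 D) *m adm br0 u)
        + 2 * \tr (adm br (mkg 0 (adjoint G0 D *m u) 0))
        - 2 * \tr (adm br (mkg 0 (K *m u) 0)) = 0].
Proof.
move=> [brl brr bra jac] [sG pd] Ks [brlg brrg _ _] br G.
split; first exact: (fwd brl brr bra sG pd Ks brlg jac).
by case=> rf _ _ _; exists 0 => u; rewrite rf scale0r.
Qed.
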